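(* Let $(X,\mathscr{R})$ be a closed mixed reaction network with $\mathscr{R}=\mathscr{R}_{\mathrm{rev}}\sqcup\mathscr{R}_{\mathrm{irr}}$ that is thermodynamically sound. Then its reversible completion $(X,\mathscr{R}^* )$ is thermodynamically sound. Moreover, reaction energies $g^*\in\mathbb{R}^{\mathscr{R}^*}$ can be chosen such that both: - $(X,\mathscr{R}^*,g^* )$ is thermodynamic; - $g^*_r<0<g^*_{\bar r}$ for all $r\in\mathscr{R}_{\mathrm{irr}}$.
   Context: A reaction network (RN) $(X,\mathscr{R})$ consists of a finite non-empty set $X$ of species and a finite non-empty set $\mathscr{R}$ of reactions. Each reaction $r$ is given by stoichiometric coefficients $s^-_{xr},s^+_{xr}\in\mathbb{N}_0$. The stoichiometric matrix $S\in\mathbb{Z}^{X\times\mathscr{R}}$ has entries $S_{xr}=s^+_{xr}-s^-_{xr}$. The RN is closed if every reaction $r$ has $x,y$ with $S_{xr}<0<S_{yr}$. The reverse $\bar r$ of $r$ has $s^-_{x\bar r}=s^+_{xr}$ and $s^+_{x\bar r}=s^-_{xr}$. A mixed RN has $\mathscr{R}=\mathscr{R}_{\mathrm{rev}}\sqcup\mathscr{R}_{\mathrm{irr}}$, where $r\in\mathscr{R}_{\mathrm{rev}}$ implies $\bar r\in\mathscr{R}_{\mathrm{rev}}$, and $r\in\mathscr{R}_{\mathrm{irr}}$ implies $\bar r\notin\mathscr{R}$. For an RN with stoichiometric matrix $S$ and $g\in\mathbb{R}^{\mathscr{R}}$, $(X,\mathscr{R},g)$ is thermodynamic if $g\in(\ker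 S)^\perp$. The mixed RN is thermodynamically sound if there is $g$ with $(X,\mathscr{R},g)$ thermodynamic and $g_r<0$ for all $r\in\mathscr{R}_{\mathrm{irr}}$. The reversible completion is $(X,\mathscr{R}^* )$ with $\mathscr{R}^*=\mathscr{R}_{\mathrm{rev}}\sqcup\mathscr{R}_{\mathrm{irr}}\sqcup\{\bar r: r\in\mathscr{R}_{\mathrm{irr}}\}$. As a reversible RN, it is thermodynamically sound if there is $g^*$ with $(X,\mathscr{R}^*,g^* )$ thermodynamic. *)

(* Defs.v *)
From mathcomp Require Import all_boot all_order all_algebra.
From mathcomp Require Import reals.
Set Implicit Arguments. Unset Strict Implicit. Unset Printing Implicit Defensive.
Import Order.TTheory GRing.Theory Num.Theory.
Local Open Scope ring_scope.

(* Reactions are identified with their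
   coefficient data, so a reaction network is a finite set of such data,
   represented as a duplicate-free sequence. *)
Definition reaction (X : finType) : Type := ({ffun X -> nat} * {ffun X -> nat})%type.

Definition sminus (X : finType) (r : reaction X) : {ffun X -> nat} := r.1.
Definition splus  (X : finType) (r : reaction X) : {ffun X -> nat} := r.2.

Definition rev_reaction (X : finType) (r : reaction X) : reaction X := (r.2, r.1).

Definition stoich (X : finType) (x : X) (r : reaction X) : int :=
  (splus r x)%:Z - (sminus r x)%:Z.

Definition closed_RN (X : finType) (Rs : seq (reaction X)) : Prop :=
  forall r, r \in Rs -> exists x y : X, (stoich x r < 0)%R /\ (0 < stoich y r)%R.

Definition mixed_RN (X : finType) (Rrev Rirr : seq (reaction X)) : Prop :=
  [/\ uniq (Rrev ++ Rirr),
      forall r, r \in Rrev -> rev_reaction r \in Rrev &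
      forall r, r \in Rirr -> rev_reaction r \notin (Rrev ++ Rirr)].

(* v in ker S  (v : R^R, only entries on Rs matter) *)
Definition in_kerS (K : realType) (X : finType) (Rs : seq (reaction X))
  (v : reaction X -> K) : Prop :=
  forall x : X, \sum_(r <- Rs) (stoich x r)%:~R * v r = 0.

Definition thermodynamic (K : realType) (X : finType) (Rs : seq (reaction X))
  (g : reaction X -> K) : Prop :=
  forall v : reaction X -> K, in_kerS Rs v -> \sum_(r <- Rs) g r * v r = 0.

Definition mixed_thermo_sound (K : realType) (X : finType)
  (Rrev Rirr : seq (reaction X)) : Prop :=
  exists g : reaction X -> K,
    thermodynamic (Rrev ++ Rirr) g /\ (forall r, r \in Rirr -> g r < 0).

Definition rev_completion (X : finType) (Rrev Rirr : seq (reaction X))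
  : seq (reaction X) := Rrev ++ Rirr ++ map (@rev_reaction X) Rirr.

Definition rev_thermo_sound (K : realType) (X : finType) (Rs : seq (reaction X))
  : Prop := exists g : reaction X -> K, thermodynamic Rs g.

(* Main.v *)
Require Import Defs.
From mathcomp Require Import all_boot all_order all_algebra.
From mathcomp Require Import reals.
Import Order.TTheory GRing.Theory Num.Theory.
Local Open Scope ring_scope.

Lemma rev_revK (X : finType) (r : reaction X) : rev_reaction (rev_reaction r) = r.
Proof. by case: r. Qed.

Lemma stoich_rev (X : finType) x (r : reaction X) : stoich x (rev_reaction r) = - stoich x r.
Proof. by rewrite /stoich /splus /sminus /= opprB. Qed.

Theorem proposition5 (K : realType) (X : finType) (Rrev Rirr : seq (reaction X)) :
  (0 < #|X|)%N ->
  Rrev ++ Rirr != [::] ->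
  mixed_RN Rrev Rirr ->
  closed_RN (Rrev ++ Rirr) ->
  mixed_thermo_sound K Rrev Rirr ->
  rev_thermo_sound K (rev_completion Rrev Rirr) /\
  exists gs : reaction X -> K,
    thermodynamic (rev_completion Rrev Rirr) gs /\
    (forall r, r \in Rirr -> gs r < 0 /\ 0 < gs (rev_reaction r)).
Proof.
move=> _ _ [hu _ hirr] _ [g [hg hneg]].
have disj : forall r, r \in Rrev -> r \notin Rirr.
  move=> r hr; apply/negP => hr'.
  move: hu; rewrite cat_uniq => /and3P [_ /hasP hh _]; apply: hh.
  by exists r.
pose gs s := if s \in Rrev ++ Rirr then g s else - g (rev_reaction s).
have gsE : forall r, r \in Rrev ++ Rirr -> gs r = g r.
  by move=> r hr; rewrite /gs hr.
have gsR : forall r, r \in Rirr -> gs (rev_reaction r) = - g r.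
  by move=> r hr; rewrite /gs (negbTE (hirr r hr)) rev_revK.
suff th : thermodynamic (rev_completion Rrev Rirr) gs.
  split; first by exists gs.
  exists gs; split => // r hr; split.
    by rewrite gsE ?mem_cat ?hr ?orbT // hneg.
  by rewrite gsR // oppr_gt0 hneg.
move=> v hv.
pose v' s := if s \in Rirr then v s - v (rev_reaction s) else v s.
have e1 : forall (F : reaction X -> K), \sum_(r <- Rrev) F r * v' r = \sum_(r <- Rrev) F r * v r.
  move=> F; apply: eq_big_seq => r hr; by rewrite /v' (negbTE (disj r hr)).
have e2 : forall (F : reaction X -> K), \sum_(r <- Rirr) F r * v' r =
    \sum_(r <- Rirr) F r * v r - \sum_(r <- Rirr) F r * v (rev_reaction r).
  move=> F; rewrite -sumrB; apply: eq_big_seq => r hr; by rewrite /v' hr mulrBr.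
have hv' : in_kerS (Rrev ++ Rirr) v'.
  move=> x; have := hv x; rewrite /rev_completion !big_cat big_map /= e1 e2.
  rewrite [X in _ + (_ + X)](eq_bigr (fun r => - ((stoich x r)%:~R * v (rev_reaction r)))); last first.
    by move=> r _; rewrite stoich_rev intrN mulNr.
  by rewrite sumrN addrA.
have := hg v' hv'; rewrite /rev_completion !big_cat big_map /= e1 e2.
have -> : \sum_(r <- Rrev) g r * v r = \sum_(r <- Rrev) gs r * v r.
  apply: eq_big_seq => r hr; by rewrite gsE // mem_cat hr.
have -> : \sum_(r <- Rirr) g r * v r = \sum_(r <- Rirr) gs r * v r.
  apply: eq_big_seq => r hr; by rewrite gsE // mem_cat hr orbT.
have -> : \sum_(r <- Rirr) gs (rev_reaction r) * v (rev_reaction r)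
        = - \sum_(r <- Rirr) g r * v (rev_reaction r).
  rewrite -sumrN; apply: eq_big_seq => r hr; by rewrite gsR // mulNr.
by rewrite addrA.
Qed.
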